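(* Every compact Rothberger space is productively weakly Rothberger: if $X$ is compact and Rothberger and $Y$ is weakly Rothberger, then $X\times Y$ is weakly Rothberger.
   Context: All spaces are infinite ${\sf T}_1$ topological spaces. Rothberger: for each sequence $(\mathcal{U}_n)$ of open covers there are $U_n\in\mathcal{U}_n$ with $\{U_n:n\in\mathbb{N}\}$ a cover. Weakly Rothberger: for each sequence $(\mathcal{U}_n)$ of open covers there are $U_n\in\mathcal{U}_n$ with $\bigcup_nU_n$ dense in the space. *)

(* Defs.v *)
From Stdlib Require Import List.

Definition set (X : Type) := X -> Prop.

Definition is_topology {X : Type} (op : set X -> Prop) : Prop :=
  op (fun _ => True) /\
  op (fun _ => False) /\
  (forall U V, op U -> op V -> op (fun x => U x /\ V x)) /\
  (forall F : set (set X), (forall U, F U -> op U) ->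
     op (fun x => exists U, F U /\ U x)).

Definition T1_space {X : Type} (op : set X -> Prop) : Prop :=
  forall x y : X, x <> y -> exists U, op U /\ U x /\ ~ U y.

Definition infinite_type (X : Type) : Prop :=
  forall l : list X, exists x, ~ In x l.

Definition open_cover {X : Type} (op : set X -> Prop) (C : set (set X)) : Prop :=
  (forall U, C U -> op U) /\ (forall x, exists U, C U /\ U x).

Definition compact {X : Type} (op : set X -> Prop) : Prop :=
  forall C, open_cover op C ->
    exists l : list (set X), (forall U, In U l -> C U) /\
                             (forall x, exists U, In U l /\ U x).

Definition dense {X : Type} (op : set X -> Prop) (D : set X) : Prop :=
  forall U, op U -> (exists x, U x) -> exists x, U x /\ D x.

Definition rothberger {X : Type} (op : set X -> Prop) : Prop :=
  forall Us : nat -> set (set X), (forall n, open_cover op (Us n)) ->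
    exists U : nat -> set X, (forall n, Us n (U n)) /\
                            (forall x, exists n, U n x).

Definition weakly_rothberger {X : Type} (op : set X -> Prop) : Prop :=
  forall Us : nat -> set (set X), (forall n, open_cover op (Us n)) ->
    exists U : nat -> set X, (forall n, Us n (U n)) /\
                            dense op (fun x => exists n, U n x).

Definition prod_open {X Y : Type} (opX : set X -> Prop) (opY : set Y -> Prop)
  (W : set (X * Y)) : Prop :=
  forall p, W p -> exists U V, opX U /\ opY V /\ U (fst p) /\ V (snd p) /\
    (forall q, U (fst q) -> V (snd q) -> W q).

(* Main.v *)
Require Import Defs.
From Stdlib Require Import List Arith Lia Cantor IndefiniteDescription FunctionalExtensionality PropExtensionality.


Lemma opY_ext {Y : Type} (opY : set Y -> Prop) (A B : set Y) :
  (forall z, A z <-> B z) -> opY A -> opY B.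
Proof.
  intros H hA.
  assert (E : A = B).
  { apply functional_extensionality; intro z.
    apply PropExtensionality.propositional_extensionality; apply H. }
  now subst.
Qed.

Lemma fin_inter {Y : Type} (opY : set Y -> Prop) (tY : is_topology opY)
  (V : nat -> set Y) (hV : forall m, opY (V m)) :
  forall M, opY (fun z => forall m, m < M -> V m z).
Proof.
  destruct tY as [hT [_ [hI _]]].
  induction M.
  - eapply opY_ext; [|exact hT]. intro z; split; intros; [lia|exact I].
  - eapply opY_ext; [|exact (hI _ _ IHM (hV M))].
    intro z; split.
    + intros [H1 H2] m Hm. destruct (Nat.eq_dec m M); [subst; auto|apply H1; lia].
    + intros H; split; auto.
Qed.

Lemma list_bound {A : Type} (P : nat -> A -> Prop) (l : list A) :
  (forall a, In a l -> exists m, P m a) ->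
  exists M, forall a, In a l -> exists m, m < M /\ P m a.
Proof.
  induction l as [|a l IH]; intros H.
  - exists 0; intros a [].
  - destruct (H a (or_introl eq_refl)) as [m0 Hm0].
    destruct IH as [M HM]; [intros b Hb; apply H; now right|].
    exists (S (max m0 M)); intros b [<-|Hb].
    + exists m0; split; [lia|auto].
    + destruct (HM b Hb) as [m [Hm Pm]]; exists m; split; [lia|auto].
Qed.

Theorem lemma5p22 (X Y : Type) (opX : set X -> Prop) (opY : set Y -> Prop)
  (tX : is_topology opX) (tY : is_topology opY)
  (t1X : T1_space opX) (t1Y : T1_space opY)
  (infX : infinite_type X) (infY : infinite_type Y)
  (cX : compact opX) (rX : rothberger opX)
  (wY : weakly_rothberger opY) :
  weakly_rothberger (prod_open opX opY).
Proof.
  intros Ws hWs.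
  set (P := fun (ky : nat * Y)
        (s : (nat -> set X) * (nat -> set Y) * (nat -> set (X * Y)) * nat) =>
        let '(k, y) := ky in let '(U, V, Wf, M) := s in
        (forall m, opY (V m) /\ V m y /\ Ws (to_nat (k, m)) (Wf m) /\
           forall q, U m (fst q) -> V m (snd q) -> Wf m q) /\
        (forall x, exists m, m < M /\ U m x)).
  assert (Hex : forall ky, exists s, P ky s).
  { intros [k y].
    set (Us := fun m (U : set X) => exists V W, opX U /\ opY V /\ V y /\
          Ws (to_nat (k, m)) W /\ forall q, U (fst q) -> V (snd q) -> W q).
    destruct (rX Us) as [U [HU Hcov]].
    { intro m; split.
      - intros U [V [W [h _]]]; exact h.
      - intro x. destruct (proj2 (hWs (to_nat (k, m))) (x, y)) as [W [HW Wxy]].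
        destruct (proj1 (hWs (to_nat (k, m))) W HW (x, y) Wxy)
          as [A [B [hA [hB [Ax [By Hsub]]]]]].
        exists A; split; [|exact Ax]. exists B, W; repeat split; auto. }
    destruct (functional_choice (fun m (VW : set Y * set (X * Y)) =>
       opY (fst VW) /\ fst VW y /\ Ws (to_nat (k, m)) (snd VW) /\
       forall q, U m (fst q) -> fst VW (snd q) -> snd VW q)) as [f Hf].
    { intro m. destruct (HU m) as [V [W [_ h]]]. exists (V, W); exact h. }
    destruct (cX (fun A => exists m, A = U m)) as [l [Hl Hlc]].
    { split.
      - intros A [m ->]. destruct (HU m) as [V [W [h _]]]; exact h.
      - intro x. destruct (Hcov x) as [n Hn]. exists (U n); eauto. }
    destruct (list_bound (fun m A => A = U m) l Hl) as [M HM].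
    exists (U, (fun m => fst (f m)), (fun m => snd (f m)), M). split.
    - intro m; exact (Hf m).
    - intro x. destruct (Hlc x) as [A [HA Ax]].
      destruct (HM A HA) as [m [Hm ->]]. eauto. }
  destruct (functional_choice P Hex) as [S HS].
  set (Vk := fun k y z => let '(U, V, Wf, M) := S (k, y) in
                          forall m, m < M -> V m z).
  destruct (wY (fun k B => exists y, B = Vk k y)) as [B [HB Hd]].
  { intro k; split.
    - intros B' [y ->]. unfold Vk. specialize (HS (k, y)).
      destruct (S (k, y)) as [[[U V] Wf] M]. destruct HS as [H1 _].
      apply fin_inter; auto. intro m; apply H1.
    - intro y. exists (Vk k y); split; [eauto|]. unfold Vk. specialize (HS (k, y)).
      destruct (S (k, y)) as [[[U V] Wf] M]. destruct HS as [H1 _].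
      intros m _; apply H1. }
  destruct (functional_choice (fun k y => B k = Vk k y)) as [yk Hyk].
  { intro k; exact (HB k). }
  exists (fun n => let '(k, m) := of_nat n in
                   let '(U, V, Wf, M) := S (k, yk k) in Wf m).
  split.
  - intro n. destruct (of_nat n) as [k m] eqn:E.
    specialize (HS (k, yk k)). destruct (S (k, yk k)) as [[[U V] Wf] M].
    destruct HS as [H1 _]. destruct (H1 m) as [_ [_ [h _]]].
    rewrite <- E, cancel_to_of in h. exact h.
  - intros G hG [p Gp].
    destruct (hG p Gp) as [A [B' [hA [hB [Ap [Bp Hsub]]]]]].
    destruct (Hd B' hB (ex_intro _ _ Bp)) as [b [B'b [k Bkb]]].
    rewrite Hyk in Bkb. unfold Vk in Bkb.
    specialize (HS (k, yk k)). destruct (S (k, yk k)) as [[[U V] Wf] M] eqn:ES.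
    destruct HS as [H1 H2]. destruct (H2 (fst p)) as [m [Hm Um]].
    exists (fst p, b). split.
    + apply Hsub; auto.
    + exists (to_nat (k, m)). rewrite cancel_of_to, ES.
      apply (proj2 (proj2 (proj2 (H1 m)))); simpl; auto.
Qed.
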